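(* On $\mathbb R^4$ with coordinates $(q_1,p_1,q_2,p_2)$ and $\omega=dp_1\wedge dq_1+dp_2\wedge dq_2$, let $H=q_1q_2-p_1p_2$, $J=\tfrac12(q_1^2+p_1^2)-\tfrac12(q_2^2+p_2^2)$, let $B=\{q_1^2+q_2^2+p_1^2+p_2^2<2r\}$ for fixed $r>0$, and take the rotation 1-form $\vartheta=d\theta_1=\dfrac{p_1\,dq_1-q_1\,dp_1}{q_1^2+p_1^2}$ on $B\setminus\{q_1=p_1=0\}$. Let $\Gamma(s)=(j(s),h(s))=(\ell\cos s,\ell\sin s)$, $s\in[0,2\pi]$, with $\ell>0$ sufficiently small. Then $\operatorname{var}_\Gamma\Phi_{\mathrm{rel}}=2\pi$, and hence the monodromy number is $k=-1$.
   Context: $X_H,X_J$ are the Hamiltonian vector fields; the flow of $X_J$ is $2\pi$-periodic. For $(j,h)\neq(0,0)$ small, $F^{-1}(j,h)\cap\overline B$ is a cylinder whose boundary consists of two $X_J$-orbits $S_-,S_+$, with the flow of $X_H$ carrying $S_-$ to $S_+$. $\Phi_{\mathrm{rel}}(j,h)=\int\vartheta$ over the portion inside $B$ of an $X_H$-orbit in $F^{-1}(j,h)$, from $S_-$ to $S_+$ (independent of the orbit). Variation: for $g:\Gamma\to\mathbb R$ with finitely many jumps $d_j=\lim_{\varepsilon\to0^+}(g(p_j+\varepsilon)-g(p_j-\varepsilon))$ along increasing $s$, $\operatorname{var}_\Gamma g=-\sum_jd_j$. Monodromy number $k$ of the torus bundle over $\Gamma$ (for any integrable system that agrees with this local model near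 a focus-focus point with singly pinched compact fiber) is related by $\operatorname{var}_\Gamma\Phi_{\mathrm{rel}}=-2\pi k$. *)

(* Defs.v *)
From Stdlib Require Import Reals List ZArith ClassicalEpsilon.
Open Scope R_scope.

Record R4 := mkR4 { q1 : R; p1 : R; q2 : R; p2 : R }.

Definition Hf (x : R4) : R := q1 x * q2 x - p1 x * p2 x.
Definition Jf (x : R4) : R :=
  / 2 * (q1 x ^ 2 + p1 x ^ 2) - / 2 * (q2 x ^ 2 + p2 x ^ 2).

Definition dH_dq1 (x : R4) : R := q2 x.
Definition dH_dp1 (x : R4) : R := - p2 x.
Definition dH_dq2 (x : R4) : R := q1 x.
Definition dH_dp2 (x : R4) : R := - p1 x.

(* Hamiltonian vector field of H for omega = dp1/\dq1 + dp2/\dq2, with the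
   convention  i_{X_H} omega = - dH, i.e. Hamilton's equations
   dq_i/dt = dH/dp_i,  dp_i/dt = - dH/dq_i. *)
Definition XH (x : R4) : R4 :=
  mkR4 (dH_dp1 x) (- dH_dq1 x) (dH_dp2 x) (- dH_dq2 x).

Definition normsq (x : R4) : R := q1 x ^ 2 + q2 x ^ 2 + p1 x ^ 2 + p2 x ^ 2.

Definition inB (r : R) (x : R4) : Prop := normsq x < 2 * r.
Definition onSphere (r : R) (x : R4) : Prop := normsq x = 2 * r.

Definition theta (x v : R4) : R :=
  (p1 x * q1 v - q1 x * p1 v) / (q1 x ^ 2 + p1 x ^ 2).

Definition is_XH_orbit (gamma : R -> R4) : Prop :=
  forall t,
    derivable_pt_lim (fun u => q1 (gamma u)) t (q1 (XH (gamma t))) /\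
    derivable_pt_lim (fun u => p1 (gamma u)) t (p1 (XH (gamma t))) /\
    derivable_pt_lim (fun u => q2 (gamma u)) t (q2 (XH (gamma t))) /\
    derivable_pt_lim (fun u => p2 (gamma u)) t (p2 (XH (gamma t))).

Definition orbit_portion (r j h : R) (gamma : R -> R4) (t0 t1 : R) : Prop :=
  is_XH_orbit gamma /\ t0 < t1 /\
  Jf (gamma t0) = j /\ Hf (gamma t0) = h /\
  onSphere r (gamma t0) /\ onSphere r (gamma t1) /\
  (forall t, t0 < t < t1 -> inB r (gamma t)).

Definition theta_along (gamma : R -> R4) (t : R) : R :=
  theta (gamma t) (XH (gamma t)).

Definition PhiRel_spec (r j h v : R) : Prop :=
  (exists gamma t0 t1, orbit_portion r j h gamma t0 t1 /\
     inhabited (Riemann_integrable (theta_along gamma) t0 t1)) /\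
  (forall gamma t0 t1, orbit_portion r j h gamma t0 t1 ->
     forall pr : Riemann_integrable (theta_along gamma) t0 t1,
       RiemannInt pr = v).

Definition Phi_rel (r j h : R) : R :=
  epsilon (inhabits 0) (PhiRel_spec r j h).

Definition right_lim (g : R -> R) (p L : R) : Prop :=
  forall eps, 0 < eps -> exists delta, 0 < delta /\
    forall s, p < s < p + delta -> Rabs (g s - L) < eps.
Definition left_lim (g : R -> R) (p L : R) : Prop :=
  forall eps, 0 < eps -> exists delta, 0 < delta /\
    forall s, p - delta < s < p -> Rabs (g s - L) < eps.
Definition cont_on_loop_at (g : R -> R) (s : R) : Prop :=
  forall eps, 0 < eps -> exists delta, 0 < delta /\
    forall s', 0 <= s' <= 2 * PI -> Rabs (s' - s) < delta ->
      Rabs (g s' - g s) < eps.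

(* var_Gamma g = v : g (a function of s in [0,2 pi]) is continuous except at
   finitely many jump points p_j (listed as (p_j, left limit, right limit)),
   d_j = right limit - left limit, and v = - sum_j d_j. *)
Definition var_Gamma (g : R -> R) (v : R) : Prop :=
  exists js : list (R * R * R),
    NoDup (map (fun x => fst (fst x)) js) /\
    (forall p Lm Lp, In (p, Lm, Lp) js ->
       0 < p < 2 * PI /\ left_lim g p Lm /\ right_lim g p Lp) /\
    (forall s, 0 <= s <= 2 * PI -> ~ In s (map (fun x => fst (fst x)) js) ->
       cont_on_loop_at g s) /\
    v = - fold_right Rplus 0 (map (fun x => snd x - snd (fst x)) js).

Definition PhiRel_on_Gamma (r l : R) (s : R) : R :=
  Phi_rel r (l * cos s) (l * sin s).

(* Main.v *)
Require Import Defs.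
From Stdlib Require Import Reals List ZArith ClassicalEpsilon Lra Psatz.
From Coquelicot Require Import Coquelicot.
Open Scope R_scope.

Lemma dval f x l l' : derivable_pt_lim f x l -> l = l' -> derivable_pt_lim f x l'.
Proof. intros H ->; exact H. Qed.
Lemma dplus f g x a b : derivable_pt_lim f x a -> derivable_pt_lim g x b ->
  derivable_pt_lim (fun t => f t + g t) x (a+b).
Proof. apply derivable_pt_lim_plus. Qed.
Lemma dminus f g x a b : derivable_pt_lim f x a -> derivable_pt_lim g x b ->
  derivable_pt_lim (fun t => f t - g t) x (a-b).
Proof. apply derivable_pt_lim_minus. Qed.
Lemma dmult f g x a b : derivable_pt_lim f x a -> derivable_pt_lim g x b ->
  derivable_pt_lim (fun t => f t * g t) x (a * g x + f x * b).
Proof. intros. eapply derivable_pt_lim_ext; [|apply derivable_pt_lim_mult; eauto].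
 intros; reflexivity. Qed.
Lemma dcomp f g x a b : derivable_pt_lim f x a -> derivable_pt_lim g (f x) b ->
  derivable_pt_lim (fun t => g (f t)) x (b * a).
Proof. intros. apply (derivable_pt_lim_comp f g); auto. Qed.
Lemma ddiv f g x a b : derivable_pt_lim f x a -> derivable_pt_lim g x b -> g x <> 0 ->
  derivable_pt_lim (fun t => f t / g t) x ((a * g x - b * f x) / (g x)²).
Proof. intros. apply (derivable_pt_lim_div f g); auto. Qed.
Lemma dconst c x : derivable_pt_lim (fun _ => c) x 0.
Proof. apply derivable_pt_lim_const. Qed.
Lemma dscal c f x a : derivable_pt_lim f x a -> derivable_pt_lim (fun t => c * f t) x (c * a).
Proof. intros H. eapply dval. apply dmult. apply dconst. exact H. cbv beta; ring. Qed.
Lemma dsq f x a : derivable_pt_lim f x a -> derivable_pt_lim (fun t => f t ^ 2) x (2 * f x * a).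
Proof. intros H. eapply derivable_pt_lim_ext with (f := fun t => f t * f t).
 intros; simpl; ring. eapply dval. apply dmult; eauto. cbv beta; ring. Qed.

Lemma alg c d n c' d' : n*n = c^2+d^2 -> 0<n -> 0 < n + d ->
 2 * (/ (1 + (c / (n + d)) ^ 2) *
  ((c' * (n + d) - (/ (2 * n) * (2 * c * c' + 2 * d * d') + d') * c) /
   (n + d)²)) = (c' * d - c * d') / (c ^ 2 + d ^ 2).
Proof.
  intros H Hn HK. rewrite <- H.
  assert (A1 : 1 + (c / (n+d))^2 = 2*n/(n+d)).
  { field_simplify_eq. nra. lra. }
  assert (A2 : c' * (n + d) - (/ (2 * n) * (2 * c * c' + 2 * d * d') + d') * c
     = (n+d) * (c' * d - c * d') / n).
  { field_simplify_eq. assert (c' * (n*n) = c' * (c^2+d^2)) by (rewrite H; ring). nra. lra. }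
  rewrite A1, A2. unfold Rsqr. field. lra.
Qed.

Definition AngF (c d : R) : R := 2 * atan (c / (sqrt (c ^ 2 + d ^ 2) + d)).

Lemma ang_deriv (c d : R -> R) t c' d' :
  derivable_pt_lim c t c' -> derivable_pt_lim d t d' ->
  0 < sqrt (c t ^ 2 + d t ^ 2) + d t ->
  derivable_pt_lim (fun t => AngF (c t) (d t)) t
     ((c' * d t - c t * d') / (c t ^ 2 + d t ^ 2)).
Proof.
  intros Hc Hd Hpos.
  assert (Hw : 0 < c t ^ 2 + d t ^ 2).
  { destruct (Req_dec (c t ^ 2 + d t ^ 2) 0) as [E|E].
    - assert (d t = 0) by nra. rewrite E, sqrt_0 in Hpos. lra.
    - nra. }
  set (n := sqrt (c t ^ 2 + d t ^ 2)) in *.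
  assert (Hn : n * n = c t ^ 2 + d t ^ 2) by (apply sqrt_sqrt; lra).
  assert (Hn0 : 0 < n) by (apply sqrt_lt_R0; lra).
  unfold AngF.
  eapply dval.
  - apply dscal. apply dcomp with (f := fun t => c t / (sqrt (c t ^ 2 + d t ^ 2) + d t)).
    + apply ddiv. exact Hc. apply dplus. apply dcomp with (f := fun t => c t ^ 2 + d t ^ 2).
      apply dplus; apply dsq; eauto. apply derivable_pt_lim_sqrt. exact Hw. exact Hd.
      fold n. lra.
    + apply derivable_pt_lim_atan.
  - cbv beta. fold n. apply alg; auto; lra.
Qed.

Lemma const_of_d0 g : (forall t, derivable_pt_lim g t 0) -> forall a b, g a = g b.
Proof.
  intros H.
  assert (K : forall a b, a < b -> g a = g b).
  { intros a b Hab.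
    pose (pr := fun x => exist (fun l => derivable_pt_lim g x l) 0 (H x) : derivable_pt g x).
    destruct (MVT_cor1 g a b pr Hab) as [c [Hc _]]. simpl in Hc. lra. }
  intros a b. destruct (Rtotal_order a b) as [h|[h|h]]. auto. subst; auto. symmetry; auto.
Qed.

Lemma exp_grow f t0 : (forall t, derivable_pt_lim f t (f t)) -> forall t, f t = f t0 * exp (t - t0).
Proof.
  intros H t.
  assert (E := const_of_d0 (fun t => f t * exp (-(t - t0)))).
  assert (HH : f t * exp (-(t - t0)) = f t0 * exp (-(t0 - t0))).
  { apply E. intros x. eapply dval. apply dmult. apply H.
    apply dcomp with (f := fun t => -(t - t0)). eapply dval. apply derivable_pt_lim_opp.
    apply dminus. apply derivable_pt_lim_id. apply dconst. reflexivity.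
    apply derivable_pt_lim_exp. cbv beta. ring. }
  replace (t0 - t0) with 0 in HH by ring. rewrite Ropp_0, exp_0 in HH.
  rewrite exp_Ropp in HH. 
  assert (0 < exp (t - t0)) by apply exp_pos.
  apply (Rmult_eq_reg_r (/ exp (t - t0))). rewrite HH. field. lra.
  apply Rgt_not_eq. apply Rinv_0_lt_compat. lra.
Qed.

Lemma exp_decay f t0 : (forall t, derivable_pt_lim f t (- f t)) -> forall t, f t = f t0 * exp (-(t - t0)).
Proof.
  intros H t.
  assert (E := const_of_d0 (fun t => f t * exp (t - t0))).
  assert (HH : f t * exp (t - t0) = f t0 * exp (t0 - t0)).
  { apply E. intros x. eapply dval. apply dmult. apply H.
    apply dcomp with (f := fun t => t - t0).
    apply dminus. apply derivable_pt_lim_id. apply dconst.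
    apply derivable_pt_lim_exp. cbv beta. ring. }
  replace (t0 - t0) with 0 in HH by ring. rewrite exp_0 in HH.
  rewrite exp_Ropp.
  assert (0 < exp (t - t0)) by apply exp_pos.
  apply (Rmult_eq_reg_r (exp (t - t0))). rewrite HH. field. lra. lra.
Qed.

Definition S1f x := q1 x + q2 x - p1 x - p2 x.
Definition S2f x := q1 x - q2 x + p1 x - p2 x.
Definition D1f x := q1 x + q2 x + p1 x + p2 x.
Definition D2f x := - q1 x + q2 x + p1 x - p2 x.

Lemma orbit_derivs gamma : is_XH_orbit gamma -> forall t,
  derivable_pt_lim (fun u => q1 (gamma u)) t (- p2 (gamma t)) /\
  derivable_pt_lim (fun u => p1 (gamma u)) t (- q2 (gamma t)) /\
  derivable_pt_lim (fun u => q2 (gamma u)) t (- p1 (gamma t)) /\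
  derivable_pt_lim (fun u => p2 (gamma u)) t (- q1 (gamma t)).
Proof. intros H t. exact (H t). Qed.

Lemma orbit_exp gamma t0 : is_XH_orbit gamma -> forall t,
  S1f (gamma t) = S1f (gamma t0) * exp (t - t0) /\
  S2f (gamma t) = S2f (gamma t0) * exp (t - t0) /\
  D1f (gamma t) = D1f (gamma t0) * exp (-(t - t0)) /\
  D2f (gamma t) = D2f (gamma t0) * exp (-(t - t0)).
Proof.
  intros H t. pose proof (orbit_derivs gamma H) as D.
  repeat split.
  - apply (exp_grow (fun u => S1f (gamma u))). intros x. destruct (D x) as [a [b [c d]]].
    unfold S1f. eapply dval. apply dminus. apply dminus. apply dplus. all: eauto. ring.
  - apply (exp_grow (fun u => S2f (gamma u))). intros x. destruct (D x) as [a [b [c d]]].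
    unfold S2f. eapply dval. apply dminus. apply dplus. apply dminus. all: eauto. ring.
  - apply (exp_decay (fun u => D1f (gamma u))). intros x. destruct (D x) as [a [b [c d]]].
    unfold D1f. eapply dval. apply dplus. apply dplus. apply dplus. all: eauto. ring.
  - apply (exp_decay (fun u => D2f (gamma u))). intros x. destruct (D x) as [a [b [c d]]].
    unfold D2f. eapply dval. apply dminus. apply dplus. apply dplus.
    apply derivable_pt_lim_opp with (f := fun u => q1 (gamma u)). all: eauto. ring.
Qed.

Lemma cplus f g x : continuity_pt f x -> continuity_pt g x -> continuity_pt (fun t => f t + g t) x.
Proof. apply continuity_pt_plus. Qed.
Lemma cminus f g x : continuity_pt f x -> continuity_pt g x -> continuity_pt (fun t => f t - g t) x.
Proof. apply continuity_pt_minus. Qed.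
Lemma cmult f g x : continuity_pt f x -> continuity_pt g x -> continuity_pt (fun t => f t * g t) x.
Proof. apply continuity_pt_mult. Qed.
Lemma cdiv f g x : continuity_pt f x -> continuity_pt g x -> g x <> 0 -> continuity_pt (fun t => f t / g t) x.
Proof. apply continuity_pt_div. Qed.
Lemma copp f x : continuity_pt f x -> continuity_pt (fun t => - f t) x.
Proof. apply continuity_pt_opp. Qed.
Lemma csq f x : continuity_pt f x -> continuity_pt (fun t => f t ^ 2) x.
Proof. intros. apply continuity_pt_ext with (f := fun t => f t * f t). intros; simpl; ring.
  apply cmult; auto. Qed.
Lemma dcont f x l : derivable_pt_lim f x l -> continuity_pt f x.
Proof. intros H. apply derivable_continuous_pt. exists l. exact H. Qed.

Lemma antip u1 u2 z1 z2 v1 v2 : 0 < u1*v1 + u2*v2 -> 0 < z1*v1 + z2*v2 ->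
  0 < sqrt ((u1*z2 - u2*z1)^2 + (u1*z1 + u2*z2)^2) + (u1*z1 + u2*z2).
Proof.
  intros Hu Hz. set (c := u1*z2 - u2*z1). set (d := u1*z1+u2*z2).
  destruct (Rlt_or_le 0 (sqrt (c^2+d^2) + d)) as [H|H]; auto. exfalso.
  assert (Hs := sqrt_pos (c^2+d^2)).
  assert (Hss : sqrt (c^2+d^2) * sqrt (c^2+d^2) = c^2+d^2) by (apply sqrt_sqrt; nra).
  assert (Hd : d <= 0) by lra.
  assert (c^2 + d^2 <= d^2) by nra.
  assert (Hc : c = 0).
  { destruct (Req_dec c 0) as [E|E]; auto. exfalso. assert (0 < c²) by (apply Rsqr_pos_lt; auto).
    unfold Rsqr in *. nra. }
  assert (Id : (u1^2+u2^2) * (z1*v1+z2*v2) = d * (u1*v1+u2*v2) + c * (-u2*v1 + u1*v2))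
    by (unfold c, d; ring).
  rewrite Hc in Id.
  assert (d * (u1*v1+u2*v2) <= 0) by nra.
  assert ((u1^2+u2^2)*(z1*v1+z2*v2) <= 0) by lra.
  assert (u1^2+u2^2 <= 0) by nra.
  assert (u1 = 0) by nra. assert (u2 = 0) by nra. subst. lra.
Qed.

Lemma coords gamma t0 : is_XH_orbit gamma -> forall t,
  q1 (gamma t) = ((S1f (gamma t0) + S2f (gamma t0)) * exp (t - t0) + (D1f (gamma t0) - D2f (gamma t0)) * exp (-(t - t0))) / 4 /\
  p1 (gamma t) = ((S2f (gamma t0) - S1f (gamma t0)) * exp (t - t0) + (D1f (gamma t0) + D2f (gamma t0)) * exp (-(t - t0))) / 4 /\
  q2 (gamma t) = ((S1f (gamma t0) - S2f (gamma t0)) * exp (t - t0) + (D1f (gamma t0) + D2f (gamma t0)) * exp (-(t - t0))) / 4 /\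
  p2 (gamma t) = ((- S1f (gamma t0) - S2f (gamma t0)) * exp (t - t0) + (D1f (gamma t0) - D2f (gamma t0)) * exp (-(t - t0))) / 4.
Proof.
  intros H t. destruct (orbit_exp gamma t0 H t) as [a [b [c d]]].
  assert (e1 : q1 (gamma t) = (S1f (gamma t) + S2f (gamma t) + D1f (gamma t) - D2f (gamma t))/4) by (unfold S1f, S2f, D1f, D2f; field).
  assert (e2 : p1 (gamma t) = (S2f (gamma t) - S1f (gamma t) + D1f (gamma t) + D2f (gamma t))/4) by (unfold S1f, S2f, D1f, D2f; field).
  assert (e3 : q2 (gamma t) = (S1f (gamma t) - S2f (gamma t) + D1f (gamma t) + D2f (gamma t))/4) by (unfold S1f, S2f, D1f, D2f; field).
  assert (e4 : p2 (gamma t) = (- S1f (gamma t) - S2f (gamma t) + D1f (gamma t) - D2f (gamma t))/4) by (unfold S1f, S2f, D1f, D2f; field).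
  rewrite e1, e2, e3, e4, a, b, c, d. repeat split; field.
Qed.

Definition PhiF (r j h : R) : R :=
  2 * atan (h * sqrt (r ^ 2 - (h ^ 2 + j ^ 2)) /
            ((r + sqrt (h ^ 2 + j ^ 2)) * (sqrt (h ^ 2 + j ^ 2) + j))).

Lemma pos_sq_eq x y : 0 <= x -> 0 <= y -> x ^ 2 = y ^ 2 -> x = y.
Proof. intros. apply Rsqr_inj; auto. unfold Rsqr. simpl in *. lra. Qed.

Lemma nz2 x y v1 v2 : 0 < x*v1 + y*v2 -> 0 < x^2+y^2.
Proof.
  intros H. destruct (Req_dec x 0) as [Ex|Ex].
  - destruct (Req_dec y 0) as [Ey|Ey]. subst; lra.
    assert (0 < y²) by (apply Rsqr_pos_lt; auto). unfold Rsqr in *. nra.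
  - assert (0 < x²) by (apply Rsqr_pos_lt; auto). unfold Rsqr in *. nra.
Qed.

Lemma dopp f x l : derivable_pt_lim f x l -> derivable_pt_lim (fun t => - f t) x (- l).
Proof. apply derivable_pt_lim_opp. Qed.

Theorem orbit_int r j h gamma t0 t1 : 0 < r -> 0 < sqrt (h^2+j^2) -> sqrt (h^2+j^2) < r ->
  0 < sqrt (h^2+j^2) + j -> orbit_portion r j h gamma t0 t1 ->
  is_RInt (theta_along gamma) t0 t1 (PhiF r j h).
Proof.
  intros Hr Hrho Hrhor Hrhoj Hop.
  destruct Hop as [Ho [Ht [HJ [HH [Hs0 [Hs1 Hin]]]]]].
  unfold PhiF. set (rho := sqrt (h^2+j^2)) in *.
  assert (Hrho2 : rho * rho = h^2+j^2) by (apply sqrt_sqrt; nra).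
  set (W := sqrt (r ^ 2 - (h ^ 2 + j ^ 2))).
  assert (HW2 : W * W = r^2 - rho*rho) by (unfold W; rewrite Hrho2; apply sqrt_sqrt; nra).
  assert (HW : 0 < W) by (unfold W; apply sqrt_lt_R0; nra).
  pose proof (coords gamma t0 Ho) as Co.
  set (s1 := S1f (gamma t0)) in *. set (s2 := S2f (gamma t0)) in *.
  set (d1 := D1f (gamma t0)) in *. set (d2 := D2f (gamma t0)) in *.
  assert (Rel1 : s1*d1+s2*d2 = 4*h). unfold s1,s2,d1,d2,S1f,S2f,D1f,D2f; rewrite <- HH. unfold Hf; ring.
  assert (Rel2 : s2*d1-s1*d2 = 4*j) by (unfold s1,s2,d1,d2,S1f,S2f,D1f,D2f; rewrite <- HJ; unfold Jf; field).
  assert (Rel3 : s1^2+s2^2+(d1^2+d2^2) = 8*r).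
  { unfold onSphere, normsq in Hs0. unfold s1,s2,d1,d2,S1f,S2f,D1f,D2f. replace (8*r) with (4*(2*r)) by ring. rewrite <- Hs0. ring. }
  set (a := s1^2+s2^2) in *. set (b := d1^2+d2^2) in *.
  set (E1 := exp (t1 - t0)). set (E1' := exp (-(t1 - t0))).
  assert (HE : E1 * E1' = 1) by (unfold E1, E1'; rewrite exp_Ropp; field; apply Rgt_not_eq, exp_pos).
  assert (HE1 : 1 < E1) by (unfold E1; rewrite <- exp_0; apply exp_increasing; lra).
  assert (HE1' : 0 < E1') by (unfold E1'; apply exp_pos).
  assert (Rel4 : a * E1^2 + b * E1'^2 = 8*r).
  { unfold onSphere, normsq in Hs1. destruct (Co t1) as [c1 [c2 [c3 c4]]].
    rewrite c1,c2,c3,c4 in Hs1. fold E1 E1' in Hs1. unfold a, b. nra. }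
  assert (Hb : b = a * E1^2).
  { assert (E: (E1^2 - 1) * (a * E1^2 - b) = 0).
    { assert (b * E1'^2 * E1^2 = b) by (replace (b * E1'^2 * E1^2) with (b * (E1*E1')^2) by ring; rewrite HE; ring).
      nra. }
    apply Rmult_integral in E. destruct E; nra. }
  assert (Hab : a * b = 16 * (rho * rho)).
  { rewrite Hrho2. unfold a, b. replace (16 * (h^2+j^2)) with ((4*h)^2 + (4*j)^2) by ring.
    rewrite <- Rel1, <- Rel2. ring. }
  assert (Ha0 : 0 <= a) by (unfold a; nra).
  assert (HaE : a * E1 = 4 * rho).
  { apply pos_sq_eq; try nra. }
  assert (Hsum : E1 + E1' = 2 * r / rho).
  { apply (Rmult_eq_reg_l rho); [|lra]. field_simplify; [|lra].
    assert (a + b = 8 * r) by (unfold a, b in *; lra).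
    rewrite Hb in H. nra. }
  assert (Hdiff : E1 - E1' = 2 * W / rho).
  { apply pos_sq_eq.
    - assert (E1' < 1) by nra. lra.
    - apply Rlt_le. apply Rdiv_lt_0_compat; lra.
    - replace ((E1 - E1')^2) with ((E1+E1')^2 - 4 * (E1*E1')) by ring. rewrite HE, Hsum.
      replace ((2*W/rho)^2) with (4*(W*W)/(rho*rho)) by (field; lra). rewrite HW2. field. lra. }
  set (u1 := q1 (gamma t0)). set (u2 := p1 (gamma t0)).
  assert (Hu1 : u1 = ((s1+s2)+(d1-d2))/4) by (unfold u1, s1, s2, d1, d2, S1f, S2f, D1f, D2f; field).
  assert (Hu2 : u2 = ((s2-s1)+(d1+d2))/4) by (unfold u2, s1, s2, d1, d2, S1f, S2f, D1f, D2f; field).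
  assert (Hu : u1^2 + u2^2 = r + j).
  { unfold u1, u2. unfold Jf in HJ. unfold onSphere, normsq in Hs0. lra. }
  set (V1 := E1*(s1+s2) + (d1-d2)). set (V2 := E1*(s2-s1) + (d1+d2)).
  assert (PV : (s1+s2)*V1 + (s2-s1)*V2 = 8*(rho+j)).
  { transitivity (2*(a*E1) + 2*(s2*d1-s1*d2)). unfold V1, V2, a; ring. rewrite HaE, Rel2; ring. }
  assert (QV : (d1-d2)*V1 + (d1+d2)*V2 = E1*(8*(rho+j))).
  { transitivity (2*E1*(s2*d1-s1*d2) + 2*b). unfold V1, V2, b; ring. rewrite Rel2, Hb.
    replace (a*E1^2) with ((a*E1)*E1) by ring. rewrite HaE. ring. }
  assert (Hzpos : forall t, 0 < q1 (gamma t) * V1 + p1 (gamma t) * V2).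
  { intros t. destruct (Co t) as [c1 [c2 _]].
    assert (Z : q1 (gamma t) * V1 + p1 (gamma t) * V2 =
      (exp (t - t0) * ((s1+s2)*V1 + (s2-s1)*V2) + exp (-(t-t0)) * ((d1-d2)*V1+(d1+d2)*V2))/4)
      by (rewrite c1, c2; field).
    rewrite Z, PV, QV. pose proof (exp_pos (t-t0)). pose proof (exp_pos (-(t-t0))).
    assert (0 < exp (t - t0) * (8 * (rho + j))) by (apply Rmult_lt_0_compat; lra).
    assert (0 < exp (- (t - t0)) * (E1 * (8 * (rho + j)))) by (apply Rmult_lt_0_compat; nra).
    lra. }
  assert (Hz : forall t, 0 < q1 (gamma t)^2 + p1 (gamma t)^2) by (intros t; apply (nz2 _ _ V1 V2); apply Hzpos).
  set (c := fun t => u1 * p1 (gamma t) - u2 * q1 (gamma t)).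
  set (d := fun t => u1 * q1 (gamma t) + u2 * p1 (gamma t)).
  set (F := fun t => AngF (c t) (d t)).
  assert (Hpos : forall t, 0 < sqrt (c t ^2 + d t ^2) + d t) by (intros t; apply antip with V1 V2; [apply (Hzpos t0) | apply Hzpos]).
  assert (Hcd : forall t, c t ^ 2 + d t ^ 2 = (u1^2+u2^2) * (q1 (gamma t)^2 + p1 (gamma t)^2))
    by (intros; unfold c, d; ring).
  assert (Hv : minus (- F t1) (- F t0) = 2 * atan (h * W / ((r + rho) * (rho + j)))).
  { assert (HF0 : F t0 = 0).
    { unfold F, AngF. replace (c t0) with 0 by (unfold c; fold u1 u2; ring).
      unfold Rdiv. rewrite Rmult_0_l, atan_0. ring. }
    destruct (Co t1) as [c1 [c2 _]]. fold E1 E1' in c1, c2.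
    assert (Hc1 : c t1 = - h * W / rho).
    { unfold c. rewrite c1, c2, Hu1, Hu2.
      transitivity ((E1' - E1)*(s1*d1+s2*d2)/8). field.
      rewrite Rel1. replace (E1' - E1) with (- (2 * W / rho)) by lra. field. lra. }
    assert (Hd1 : d t1 = rho + j * r / rho).
    { unfold d. rewrite c1, c2, Hu1, Hu2.
      transitivity ((2*E1*a + 2*E1'*b + 2*(E1+E1')*(s2*d1-s1*d2))/16). unfold a, b. field.
      rewrite Hb, Rel2. replace (2*E1*a + 2*E1'*(a*E1^2) + 2*(E1+E1')*(4*j)) with (2*(a*E1) + 2*(a*E1)*(E1*E1') + 8*j*(E1+E1')) by ring.
      rewrite HaE, HE, Hsum. field. lra. }
    assert (Hz1 : q1 (gamma t1)^2 + p1 (gamma t1)^2 = r + j).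
    { rewrite c1, c2.
      transitivity ((2*(a*E1^2 + b*E1'^2) + 4*(E1*E1')*(s2*d1-s1*d2))/16). unfold a, b. field.
      rewrite Rel4, HE, Rel2. field. }
    assert (Hsq : sqrt (c t1 ^ 2 + d t1 ^ 2) = r + j).
    { rewrite Hcd, Hu, Hz1. replace ((r+j)*(r+j)) with ((r+j)^2) by ring. apply sqrt_pow2. lra. }
    unfold minus, plus, opp. simpl. rewrite HF0. unfold F, AngF. rewrite Hsq, Hc1, Hd1.
    replace (- h * W / rho / (r + j + (rho + j * r / rho))) with (- (h * W / ((r + rho) * (rho + j)))).
    rewrite atan_opp. ring.
    field. repeat split; try lra.
    all: assert (0 < (r+rho)*(rho+j)) by (apply Rmult_lt_0_compat; lra); nra. }
  rewrite <- Hv. apply (is_RInt_derive (fun t => - F t) (theta_along gamma)).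
  - intros x _. apply is_derive_Reals. destruct (orbit_derivs gamma Ho x) as [D1 [D2 [D3 D4]]].
    eapply dval. apply dopp. apply ang_deriv with
       (c' := u1 * (- q2 (gamma x)) - u2 * (- p2 (gamma x)))
       (d' := u1 * (- p2 (gamma x)) + u2 * (- q2 (gamma x))).
    + apply dminus; apply dscal; auto.
    + apply dplus; apply dscal; auto.
    + apply Hpos.
    + rewrite Hcd. specialize (Hz x). unfold theta_along, theta, XH, dH_dp1, dH_dq1. simpl.
      unfold c, d. assert (0 < u1^2+u2^2) by lra. simpl in *. field. split; lra.
  - intros x _. apply continuity_pt_filterlim.
    destruct (orbit_derivs gamma Ho x) as [D1 [D2 [D3 D4]]].
    apply continuity_pt_ext with (f := fun t => (p1 (gamma t) * (- p2 (gamma t)) - q1 (gamma t) * (- q2 (gamma t))) / (q1 (gamma t)^2 + p1 (gamma t)^2)).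
    { intros t. unfold theta_along, theta, XH, dH_dp1, dH_dq1. simpl. reflexivity. }
    apply cdiv. apply cminus; apply cmult; try apply copp; eapply dcont; eauto.
    apply cplus; apply csq; eapply dcont; eauto.
    specialize (Hz x). lra.
Qed.

Definition gexp s1 s2 d1 d2 t := mkR4
  (((s1+s2)*exp t + (d1-d2)*exp (-t))/4) (((s2-s1)*exp t + (d1+d2)*exp (-t))/4)
  (((s1-s2)*exp t + (d1+d2)*exp (-t))/4) (((-s1-s2)*exp t + (d1-d2)*exp (-t))/4).

Lemma dexp2 A B t : derivable_pt_lim (fun u => (A * exp u + B * exp (-u))/4) t ((A * exp t - B * exp (-t))/4).
Proof.
  apply derivable_pt_lim_ext with (f := fun u => /4 * (A * exp u + B * exp (-u))).
  intros; unfold Rdiv; ring.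
  eapply dval. apply dscal. apply dplus. apply dscal. apply derivable_pt_lim_exp.
  apply dscal. apply dcomp with (f := fun u => - u). apply dopp. apply derivable_pt_lim_id.
  apply derivable_pt_lim_exp. field.
Qed.

Lemma gexp_orbit s1 s2 d1 d2 : is_XH_orbit (gexp s1 s2 d1 d2).
Proof.
  intros t. unfold gexp, XH, dH_dp1, dH_dq1, dH_dp2, dH_dq2. simpl.
  repeat split; (eapply dval; [apply dexp2| field]).
Qed.

Lemma eem t : exp t * exp (-t) = 1.
Proof. rewrite exp_Ropp. field. apply Rgt_not_eq, exp_pos. Qed.

Lemma gexp_H s1 s2 d1 d2 t : Hf (gexp s1 s2 d1 d2 t) = (s1*d1+s2*d2)/4.
Proof. transitivity ((s1*d1+s2*d2)/4 * (exp t * exp (-t))). unfold Hf, gexp; simpl; field.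
  rewrite eem; ring. Qed.
Lemma gexp_J s1 s2 d1 d2 t : Jf (gexp s1 s2 d1 d2 t) = (s2*d1-s1*d2)/4.
Proof. transitivity ((s2*d1-s1*d2)/4 * (exp t * exp (-t))). unfold Jf, gexp; simpl; field.
  rewrite eem; ring. Qed.
Lemma gexp_N s1 s2 d1 d2 t : normsq (gexp s1 s2 d1 d2 t) = ((s1^2+s2^2)*exp t^2 + (d1^2+d2^2)*exp (-t)^2)/4.
Proof. unfold normsq, gexp; simpl; field. Qed.

Lemma exists_orbit r j h : 0 < r -> 0 < sqrt (h^2+j^2) -> sqrt (h^2+j^2) < r ->
  exists gamma t0 t1, orbit_portion r j h gamma t0 t1.
Proof.
  intros Hr Hrho Hrhor. set (rho := sqrt (h^2+j^2)) in *.
  assert (Hrho2 : rho * rho = h^2+j^2) by (apply sqrt_sqrt; nra).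
  set (W := sqrt (r ^ 2 - rho^2)).
  assert (HW2 : W * W = r^2 - rho*rho) by (unfold W; rewrite sqrt_sqrt; nra).
  assert (HW : 0 < W) by (unfold W; apply sqrt_lt_R0; nra).
  assert (HWr : W < r) by nra.
  assert (HWr2 : r - rho < W) by nra.
  set (X := 4 * (r - W)).
  assert (HX : 0 < X) by (unfold X; lra).
  set (x := sqrt X).
  assert (Hx2 : x * x = X) by (apply sqrt_sqrt; lra).
  assert (Hx : 0 < x) by (apply sqrt_lt_R0; lra).
  set (E1 := 4 * rho / X).
  assert (HE1 : 1 < E1) by (unfold E1; apply (Rmult_lt_reg_r X); [lra|]; field_simplify; unfold X; lra).
  exists (gexp x 0 (4*h/x) (-(4*j)/x)), 0, (ln E1).
  assert (Hquad : X * X - 8 * r * X + 16 * (rho*rho) = 0) by (unfold X; nra).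
  assert (HN : forall t, normsq (gexp x 0 (4*h/x) (-(4*j)/x) t) = (X * exp t^2 + 16*(rho*rho)/X * exp (-t)^2)/4).
  { intros t. rewrite gexp_N. rewrite Hrho2. rewrite <- Hx2. field. lra. }
  assert (HE1X : E1 * X = 4 * rho) by (unfold E1; field; lra).
  assert (H8 : X*E1^2 + X = 8*r).
  { apply (Rmult_eq_reg_l X); [|lra]. replace (16*(rho*rho)) with ((E1*X)*(E1*X)) in Hquad by (rewrite HE1X; ring). nra. }
  unfold orbit_portion. split; [apply gexp_orbit|]. split; [|split; [|split; [|split; [|split]]]].
  - rewrite <- ln_1. apply ln_increasing; lra.
  - rewrite gexp_J. field. lra.
  - rewrite gexp_H. field. lra.
  - unfold onSphere. rewrite HN, exp_0, Ropp_0, exp_0. field_simplify. 2: lra.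
    apply (Rmult_eq_reg_r (4*X)). 2: lra. field_simplify. 2: lra. nra.
  - unfold onSphere. rewrite HN, exp_Ropp, exp_ln by lra.
    replace (16*(rho*rho)) with ((E1*X)*(E1*X)) by (rewrite HE1X; ring).
    transitivity ((X*E1^2 + X)/4). field; lra. rewrite H8. field.
  - intros t [Ht0 Ht1]. unfold inB. rewrite HN, exp_Ropp.
    replace (16*(rho*rho)) with ((E1*X)*(E1*X)) by (rewrite HE1X; ring).
    assert (He1 : 1 < exp t) by (rewrite <- exp_0; apply exp_increasing; lra).
    assert (He2 : exp t < E1) by (rewrite <- (exp_ln E1) by lra; apply exp_increasing; lra).
    set (e := exp t) in *.
    replace (2*r) with ((X*E1^2 + X)/4) by lra.
    replace ((X * e ^ 2 + E1 * X * (E1 * X) / X * (/ e) ^ 2) / 4) with ((X*e^2 + X*E1^2/e^2)/4) by (field; lra).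
    apply Rmult_lt_compat_r. lra.
    apply (Rmult_lt_reg_r (e^2)). nra.
    replace ((X * e ^ 2 + X * E1 ^ 2 / e ^ 2) * e ^ 2) with (X*e^2*e^2 + X*E1^2) by (field; lra).
    assert (0 < (e^2-1)*(E1^2-e^2)) by (apply Rmult_lt_0_compat; nra).
    nra.
Qed.

Lemma Phi_rel_val r j h : 0 < r -> 0 < sqrt (h^2+j^2) -> sqrt (h^2+j^2) < r ->
  0 < sqrt (h^2+j^2) + j -> Phi_rel r j h = PhiF r j h.
Proof.
  intros H1 H2 H3 H4.
  assert (Hs : PhiRel_spec r j h (PhiF r j h)).
  { split.
    - destruct (exists_orbit r j h H1 H2 H3) as [g [a [b Hp]]].
      exists g, a, b. split; auto. constructor. apply ex_RInt_Reals_0.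
      exists (PhiF r j h). apply orbit_int; auto.
    - intros g a b Hp pr. rewrite <- RInt_Reals. apply is_RInt_unique. apply orbit_int; auto. }
  assert (He : PhiRel_spec r j h (Phi_rel r j h)).
  { unfold Phi_rel. apply epsilon_spec. exists (PhiF r j h). exact Hs. }
  destruct He as [[g [a [b [Hp [pr]]]]] He2].
  destruct Hs as [_ Hs].
  rewrite <- (He2 g a b Hp pr). apply Hs. exact Hp.
Qed.

Lemma ccomp f g x : continuity_pt f x -> continuity_pt g (f x) -> continuity_pt (fun t => g (f t)) x.
Proof. intros. apply (continuity_pt_comp f g); auto. Qed.
Lemma cconst c x : continuity_pt (fun _ => c) x.
Proof. apply continuity_pt_const. intros a b; reflexivity. Qed.

Lemma cont_eps f x : continuity_pt f x -> forall eps, 0 < eps ->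
  exists delta, 0 < delta /\ forall y, Rabs (y - x) < delta -> Rabs (f y - f x) < eps.
Proof.
  intros H eps He. destruct (H eps He) as [d [Hd Hf]]. exists d. split; auto.
  intros y Hy. destruct (Req_dec y x) as [E|E].
  - subst. rewrite Rminus_diag, Rabs_R0. lra.
  - apply Hf. split. split. exact I. auto. exact Hy.
Qed.

Lemma one_plus_cos s : 0 <= s <= 2 * PI -> s <> PI -> 0 < 1 + cos s.
Proof.
  intros Hs Hn. replace s with (2 * (s/2)) by field. rewrite cos_2a_cos.
  assert (cos (s/2) <> 0).
  { destruct (Rtotal_order (s/2) (PI/2)) as [H|[H|H]].
    - assert (0 < cos (s/2)) by (apply cos_gt_0; pose PI_RGT_0; lra). lra.
    - exfalso. apply Hn. lra.
    - assert (cos (s/2) < 0) by (apply cos_lt_0; pose PI_RGT_0; lra). lra. }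
  assert (0 < Rsqr (cos (s/2))) by (apply Rsqr_pos_lt; auto). unfold Rsqr in *. lra.
Qed.

Section G.
Variable c0 : R.
Hypothesis Hc0 : 0 < c0.
Definition Gf (s : R) : R := 2 * atan (c0 * sin s / (1 + cos s)).
Definition Kf (s : R) : R := 2 * atan (sin s / (c0 * (1 - cos s))).

Lemma catan x : continuity_pt atan x.
Proof. eapply dcont. apply derivable_pt_lim_atan. Qed.

Lemma Gf_cont s : 0 < 1 + cos s -> continuity_pt Gf s.
Proof.
  intros H. unfold Gf.
  apply cmult. apply cconst. apply ccomp with (f := fun t => c0 * sin t / (1 + cos t)).
  apply cdiv. apply cmult. apply cconst. apply continuity_sin. apply cplus. apply cconst.
  apply continuity_cos. lra. apply catan.
Qed.

Lemma Kf_cont : continuity_pt Kf PI.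
Proof.
  unfold Kf.
  apply cmult. apply cconst. apply ccomp with (f := fun t => sin t / (c0 * (1 - cos t))).
  apply cdiv. apply continuity_sin. apply cmult. apply cconst. apply cminus. apply cconst.
  apply continuity_cos. rewrite cos_PI. apply Rgt_not_eq. lra. apply catan.
Qed.

Lemma Kf_PI : Kf PI = 0.
Proof. unfold Kf. rewrite sin_PI. unfold Rdiv. rewrite Rmult_0_l, atan_0. ring. Qed.

Lemma Gf_left s : 0 < s < PI -> Gf s = PI - Kf s.
Proof.
  intros Hs. unfold Gf, Kf.
  assert (Hsin : 0 < sin s) by (apply sin_gt_0; lra).
  assert (Hsc := sin2_cos2 s). unfold Rsqr in Hsc.
  assert (Hc1 : cos s < 1) by nra. assert (Hc2 : -1 < cos s) by nra.
  set (x := c0 * sin s / (1 + cos s)).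
  assert (Hx : 0 < x) by (unfold x; apply Rdiv_lt_0_compat; [apply Rmult_lt_0_compat|]; lra).
  assert (E : sin s / (c0 * (1 - cos s)) = / x).
  { unfold x. field_simplify_eq. nra. repeat split; lra. }
  rewrite E, atan_inv by exact Hx. field.
Qed.

Lemma Gf_right s : PI < s < 2 * PI -> Gf s = - PI - Kf s.
Proof.
  intros Hs. unfold Gf, Kf.
  assert (Hsin : sin s < 0) by (apply sin_lt_0; lra).
  assert (Hsc := sin2_cos2 s). unfold Rsqr in Hsc.
  assert (Hc1 : cos s < 1) by nra. assert (Hc2 : -1 < cos s) by nra.
  set (x := - (c0 * sin s / (1 + cos s))).
  assert (Hx : 0 < x).
  { unfold x. apply Ropp_0_gt_lt_contravar. apply Rdiv_neg_pos. nra. lra. }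
  assert (E : sin s / (c0 * (1 - cos s)) = - / x).
  { unfold x. field_simplify_eq. nra. repeat split; try lra. }
  replace (c0 * sin s / (1 + cos s)) with (- x) by (unfold x; ring).
  rewrite E, atan_opp, atan_opp, atan_inv by exact Hx. field.
Qed.
End G.

Section V.
Variable c0 : R.
Hypothesis Hc0 : 0 < c0.
Variable g : R -> R.
Hypothesis Hg : forall s, 0 <= s <= 2 * PI -> s <> PI -> g s = Gf c0 s.

Lemma PIpos : 0 < PI. Proof. apply PI_RGT_0. Qed.

Lemma g_cont s : 0 <= s <= 2 * PI -> s <> PI -> cont_on_loop_at g s.
Proof.
  intros Hs Hn eps He.
  destruct (cont_eps _ _ (Gf_cont c0 s (one_plus_cos s Hs Hn)) eps He) as [d [Hd Hf]].
  exists (Rmin d (Rabs (s - PI))). split.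
  - apply Rmin_pos; auto. apply Rabs_pos_lt. lra.
  - intros s' Hs' Hd'. assert (H1 := Rmin_l d (Rabs (s - PI))). assert (H2 := Rmin_r d (Rabs (s - PI))).
    assert (s' <> PI).
    { intros E. subst s'. rewrite Rabs_minus_sym in Hd'. lra. }
    rewrite (Hg s'), (Hg s); auto. apply Hf. lra.
Qed.

Lemma g_left : left_lim g PI PI.
Proof.
  intros eps He. destruct (cont_eps _ _ (Kf_cont c0 Hc0) eps He) as [d [Hd Hf]].
  exists (Rmin d PI). split. apply Rmin_pos; auto. apply PIpos.
  intros s Hs. assert (H1 := Rmin_l d PI). assert (H2 := Rmin_r d PI).
  rewrite Hg by lra. rewrite (Gf_left c0 Hc0) by lra.
  replace (PI - Kf c0 s - PI) with (- (Kf c0 s - Kf c0 PI)) by (rewrite Kf_PI; ring).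
  rewrite Rabs_Ropp. apply Hf. rewrite Rabs_left; lra.
Qed.

Lemma g_right : right_lim g PI (- PI).
Proof.
  intros eps He. destruct (cont_eps _ _ (Kf_cont c0 Hc0) eps He) as [d [Hd Hf]].
  exists (Rmin d PI). split. apply Rmin_pos; auto. apply PIpos.
  intros s Hs. assert (H1 := Rmin_l d PI). assert (H2 := Rmin_r d PI).
  rewrite Hg by lra. rewrite (Gf_right c0 Hc0) by lra.
  replace (- PI - Kf c0 s - - PI) with (- (Kf c0 s - Kf c0 PI)) by (rewrite Kf_PI; ring).
  rewrite Rabs_Ropp. apply Hf. rewrite Rabs_right; lra.
Qed.

Lemma var_ok : var_Gamma g (2 * PI).
Proof.
  exists ((PI, PI, - PI) :: nil). simpl. split; [|split; [|split]].
  - constructor. simpl; tauto. constructor.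
  - intros p Lm Lp [E|[]]. inversion E; subst. split. pose PIpos; lra.
    split. apply g_left. apply g_right.
  - intros s Hs Hn. apply g_cont; [exact Hs| intros E; apply Hn; left; auto].
  - ring.
Qed.

Lemma left_uniq f p L1 L2 : left_lim f p L1 -> left_lim f p L2 -> L1 = L2.
Proof.
  intros H1 H2. destruct (Req_dec L1 L2) as [E|E]; auto. exfalso.
  set (e := Rabs (L1 - L2) / 2). assert (He : 0 < e) by (unfold e; apply Rdiv_lt_0_compat; [apply Rabs_pos_lt; lra|lra]).
  destruct (H1 e He) as [d1 [Hd1 K1]]. destruct (H2 e He) as [d2 [Hd2 K2]].
  set (d := Rmin d1 d2). assert (0 < d) by (apply Rmin_pos; auto).
  assert (d <= d1) by apply Rmin_l. assert (d <= d2) by apply Rmin_r.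
  specialize (K1 (p - d/2)). specialize (K2 (p - d/2)).
  assert (A1 : Rabs (f (p - d/2) - L1) < e) by (apply K1; lra).
  assert (A2 : Rabs (f (p - d/2) - L2) < e) by (apply K2; lra).
  assert (Rabs (L1 - L2) <= Rabs (f (p - d/2) - L1) + Rabs (f (p - d/2) - L2)).
  { replace (L1 - L2) with (-(f (p - d/2) - L1) + (f (p - d/2) - L2)) by ring.
    eapply Rle_trans. apply Rabs_triang. rewrite Rabs_Ropp. lra. }
  unfold e in *. lra.
Qed.

Lemma right_uniq f p L1 L2 : right_lim f p L1 -> right_lim f p L2 -> L1 = L2.
Proof.
  intros H1 H2. destruct (Req_dec L1 L2) as [E|E]; auto. exfalso.
  set (e := Rabs (L1 - L2) / 2). assert (He : 0 < e) by (unfold e; apply Rdiv_lt_0_compat; [apply Rabs_pos_lt; lra|lra]).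
  destruct (H1 e He) as [d1 [Hd1 K1]]. destruct (H2 e He) as [d2 [Hd2 K2]].
  set (d := Rmin d1 d2). assert (0 < d) by (apply Rmin_pos; auto).
  assert (d <= d1) by apply Rmin_l. assert (d <= d2) by apply Rmin_r.
  specialize (K1 (p + d/2)). specialize (K2 (p + d/2)).
  assert (A1 : Rabs (f (p + d/2) - L1) < e) by (apply K1; lra).
  assert (A2 : Rabs (f (p + d/2) - L2) < e) by (apply K2; lra).
  assert (Rabs (L1 - L2) <= Rabs (f (p + d/2) - L1) + Rabs (f (p + d/2) - L2)).
  { replace (L1 - L2) with (-(f (p + d/2) - L1) + (f (p + d/2) - L2)) by ring.
    eapply Rle_trans. apply Rabs_triang. rewrite Rabs_Ropp. lra. }
  unfold e in *. lra.
Qed.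

Lemma cont_left f p : 0 < p < 2 * PI -> cont_on_loop_at f p -> left_lim f p (f p).
Proof.
  intros Hp H eps He. destruct (H eps He) as [d [Hd K]]. exists (Rmin d p).
  split. apply Rmin_pos; lra. intros s Hs. assert (Rmin d p <= d) by apply Rmin_l.
  assert (Rmin d p <= p) by apply Rmin_r. apply K. lra. rewrite Rabs_left; lra.
Qed.

Lemma cont_right f p : 0 < p < 2 * PI -> cont_on_loop_at f p -> right_lim f p (f p).
Proof.
  intros Hp H eps He. destruct (H eps He) as [d [Hd K]]. exists (Rmin d (2*PI - p)).
  split. apply Rmin_pos; lra. intros s Hs. assert (Rmin d (2*PI-p) <= d) by apply Rmin_l.
  assert (Rmin d (2*PI-p) <= 2*PI-p) by apply Rmin_r. apply K. lra. rewrite Rabs_right; lra.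
Qed.

Lemma sum_lemma (js : list (R * R * R)) :
  NoDup (map (fun x => fst (fst x)) js) ->
  (forall p Lm Lp, In (p, Lm, Lp) js -> (p = PI /\ Lm = PI /\ Lp = - PI) \/ (p <> PI /\ Lm = Lp)) ->
  fold_right Rplus 0 (map (fun x => snd x - snd (fst x)) js) =
  if in_dec Req_EM_T PI (map (fun x => fst (fst x)) js) then - (2 * PI) else 0.
Proof.
  induction js as [|[[p Lm] Lp] js IH]; intros Hnd Hc; simpl.
  - reflexivity.
  - simpl in Hnd. apply NoDup_cons_iff in Hnd. destruct Hnd as [Hni Hnd'].
    rewrite IH; auto. 2: { intros; apply Hc; right; auto. }
    destruct (Hc p Lm Lp (or_introl eq_refl)) as [[E1 [E2 E3]]|[E1 E2]].
    + subst. destruct (Req_EM_T PI PI) as [_|n]; [|congruence]. simpl.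
      destruct (in_dec Req_EM_T PI (map (fun x => fst (fst x)) js)) as [i|i]. contradiction. ring.
    + subst. destruct (Req_dec_T p PI) as [e|n1]; [contradiction|].
      destruct (in_dec Req_dec_T PI (map (fun x : R * R * R => fst (fst x)) js)); ring.
Qed.

Lemma var_unique v : var_Gamma g v -> v = 2 * PI.
Proof.
  intros [js [Hnd [Hin [Hcont Hv]]]].
  assert (Hc : forall p Lm Lp, In (p, Lm, Lp) js -> (p = PI /\ Lm = PI /\ Lp = - PI) \/ (p <> PI /\ Lm = Lp)).
  { intros p Lm Lp Hi. destruct (Hin p Lm Lp Hi) as [Hp [Hl Hr]].
    destruct (Req_dec p PI) as [E|E].
    - left. subst. split; auto. split. eapply left_uniq; eauto. apply g_left.
      eapply right_uniq; eauto. apply g_right.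
    - right. split; auto. assert (C := g_cont p ltac:(lra) E).
      transitivity (g p). eapply left_uniq; eauto. apply cont_left; auto.
      eapply right_uniq; eauto. apply cont_right; auto. }
  rewrite Hv, (sum_lemma js Hnd Hc).
  destruct (in_dec Req_EM_T PI _) as [_|n]. ring. exfalso.
  assert (C : cont_on_loop_at g PI) by (apply Hcont; auto; pose PIpos; lra).
  assert (L1 := cont_left g PI ltac:(pose PIpos; lra) C).
  assert (L2 := cont_right g PI ltac:(pose PIpos; lra) C).
  assert (A := left_uniq _ _ _ _ L1 g_left). assert (B := right_uniq _ _ _ _ L2 g_right).
  pose PIpos. lra.
Qed.
End V.

Theorem mainTheorem13 :
  forall r : R, 0 < r ->
  exists l0 : R, 0 < l0 /\
    forall l : R, 0 < l < l0 ->
      var_Gamma (PhiRel_on_Gamma r l) (2 * PI) /\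
      (forall k : Z, var_Gamma (PhiRel_on_Gamma r l) (- (2 * PI * IZR k)) ->
         k = (-1)%Z).
Proof.
  intros r Hr. exists r. split; auto. intros l [Hl Hlr].
  set (c0 := sqrt (r^2 - l^2) / (r + l)).
  assert (Hc0 : 0 < c0) by (unfold c0; apply Rdiv_lt_0_compat; [apply sqrt_lt_R0; nra|lra]).
  assert (Hg : forall s, 0 <= s <= 2 * PI -> s <> PI -> PhiRel_on_Gamma r l s = Gf c0 s).
  { intros s Hs Hn. pose proof (one_plus_cos s Hs Hn) as Hc.
    assert (Hhj : (l * sin s)^2 + (l * cos s)^2 = l^2).
    { assert (Hsc := sin2_cos2 s). unfold Rsqr in Hsc. nra. }
    assert (Hsq : sqrt ((l * sin s)^2 + (l * cos s)^2) = l) by (rewrite Hhj; apply sqrt_pow2; lra).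
    unfold PhiRel_on_Gamma. rewrite Phi_rel_val.
    - unfold PhiF, Gf. rewrite Hsq, Hhj. unfold c0. f_equal. f_equal. field. repeat split; nra.
    - exact Hr.
    - rewrite Hsq; exact Hl.
    - rewrite Hsq; exact Hlr.
    - rewrite Hsq. nra. }
  split.
  - apply (var_ok c0 Hc0). exact Hg.
  - intros k Hk. apply (var_unique c0 Hc0 _ Hg) in Hk.
    assert (IZR k = -1) by (pose PI_RGT_0; nra).
    apply eq_IZR. rewrite H. reflexivity.
Qed.
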